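(* Under the standing setting below, suppose $\Omega=\mathcal{T}^{-1}(0)\neq\emptyset$, and let $\{z^k\}$ be any sequence generated by $z^{k+1}\approx\mathcal{P}_k(z^k)$ satisfying criterion (A): $\|z^{k+1}-\mathcal{P}_k(z^k)\|_{\mathcal{M}_k}\le\epsilon_k$ with $\epsilon_k\ge0$ and $\sum_{k=0}^\infty\epsilon_k<\infty$. Then $\{z^k\}$ is bounded, \[\mathrm{dist}_{\mathcal{M}_{k+1}}(z^{k+1},\Omega)\le(1+\nu_k)\,\mathrm{dist}_{\mathcal{M}_k}(z^k,\Omega)+(1+\nu_k)\epsilon_k\quad\forall k\ge0,\] and $\{z^k\}$ converges to a point $z^\infty$ with $0\in\mathcal{T}(z^\infty)$.
   Context: Standing setting: $\mathcal{X}$ is a finite-dimensional real Hilbert space, $\mathcal{T}:\mathcal{X}\rightrightarrows\mathcal{X}$ is maximal monotone. $\{c_k\}$ is a sequence of positive reals bounded away from zero. $\{\mathcal{M}_k\}$ are self-adjoint positive definite linear operators on $\mathcal{X}$ satisfying $(1+\nu_k)\mathcal{M}_k\succeq\mathcal{M}_{k+1}$, $\mathcal{M}_k\succeq\lambda_{\min}\mathcal{I}$ for all $k\ge0$, and $\limsup_{k\to\infty}\lambda_{\max}(\mathcal{M}_k)=\lambda_\infty$, where $\{\nu_k\}$ is a nonnegative summable sequence and $+\infty>\lambda_\infty\ge\lambda_{\min}>0$. $\mathcal{P}_k:=(\mathcal{M}_k+c_k\mathcal{T})^{-1}\mathcal{M}_k$ (single-valued). For a self-adjoint positive definite $\mathcal{M}$,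 $\|x\|_{\mathcal{M}}=\sqrt{\langle x,\mathcal{M}x\rangle}$ and $\mathrm{dist}_{\mathcal{M}}(x,D)=\inf_{x'\in D}\|x-x'\|_{\mathcal{M}}$. *)

(* Defs.v *)
(* X = R^n realized as vectors nat -> R whose coordinates >= n vanish. *)
From Stdlib Require Import Reals Lra Lia.
Open Scope R_scope.

Definition vec := nat -> R.
Definition mat := nat -> nat -> R.

Fixpoint rsum (n : nat) (f : nat -> R) : R :=
  match n with O => 0 | S m => rsum m f + f m end.

Definition inX (n : nat) (x : vec) : Prop := forall i, (n <= i)%nat -> x i = 0.
Definition nonzero (n : nat) (x : vec) : Prop := exists i, (i < n)%nat /\ x i <> 0.

Definition zerov : vec := fun _ => 0.
Definition vsub (x y : vec) : vec := fun i => x i - y i.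

Definition ip (n : nat) (x y : vec) : R := rsum n (fun i => x i * y i).
Definition enorm (n : nat) (x : vec) : R := sqrt (ip n x x).

Definition mapply (n : nat) (M : mat) (x : vec) : vec :=
  fun i => if Nat.ltb i n then rsum n (fun j => M i j * x j) else 0.

Definition self_adjoint (n : nat) (M : mat) : Prop :=
  forall i j, (i < n)%nat -> (j < n)%nat -> M i j = M j i.
Definition pos_def (n : nat) (M : mat) : Prop :=
  forall x, inX n x -> nonzero n x -> 0 < ip n x (mapply n M x).

Definition loewner_le (n : nat) (A B : mat) : Prop :=
  forall x, inX n x -> ip n x (mapply n A x) <= ip n x (mapply n B x).
Definition mscale (a : R) (M : mat) : mat := fun i j => a * M i j.
Definition idmat : mat := fun i j => if Nat.eqb i j then 1 else 0.

Definition eigenvalue (n : nat) (M : mat) (l : R) : Prop :=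
  exists x, inX n x /\ nonzero n x /\ forall i, (i < n)%nat -> mapply n M x i = l * x i.
Definition is_lambda_max (n : nat) (M : mat) (l : R) : Prop :=
  eigenvalue n M l /\ forall l', eigenvalue n M l' -> l' <= l.

Definition limsup_eq (u : nat -> R) (L : R) : Prop :=
  forall eps, 0 < eps ->
    (exists N, forall k, (N <= k)%nat -> u k <= L + eps) /\
    (forall N, exists k, (N <= k)%nat /\ L - eps <= u k).

Definition normM (n : nat) (M : mat) (x : vec) : R := sqrt (ip n x (mapply n M x)).

Definition is_distM (n : nat) (M : mat) (x : vec) (D : vec -> Prop) (d : R) : Prop :=
  (forall x', D x' -> d <= normM n M (vsub x x')) /\
  (forall e, 0 < e -> exists x', D x' /\ normM n M (vsub x x') < d + e).

(* operators X ==> X as relations: T x y  means  y \in T(x) *)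
Definition graph_in_X (n : nat) (T : vec -> vec -> Prop) : Prop :=
  forall x y, T x y -> inX n x /\ inX n y.
Definition monotone_op (n : nat) (T : vec -> vec -> Prop) : Prop :=
  forall x y x' y', T x y -> T x' y' -> 0 <= ip n (vsub x x') (vsub y y').
Definition maximal_monotone (n : nat) (T : vec -> vec -> Prop) : Prop :=
  graph_in_X n T /\ monotone_op n T /\
  forall x y, inX n x -> inX n y ->
    (forall x' y', T x' y' -> 0 <= ip n (vsub x x') (vsub y y')) -> T x y.

(* w = P(z) = (M + c T)^{-1} M z, i.e.  M z \in M w + c T(w) *)
Definition is_prox (n : nat) (M : mat) (c : R) (T : vec -> vec -> Prop) (z w : vec) : Prop :=
  exists t, T w t /\ forall i, (i < n)%nat -> mapply n M z i = mapply n M w i + c * t i.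

(* Main.v *)
Require Import Defs.
From Stdlib Require Import Reals.
From Stdlib Require Import ZArith Reals Lra Lia Rtopology ClassicalEpsilon Classical FunctionalExtensionality.
Open Scope R_scope.

Lemma rsum_ext m f g : (forall i, (i < m)%nat -> f i = g i) -> rsum m f = rsum m g.
Proof. induction m; simpl; intros H; auto. rewrite IHm by (intros; apply H; lia). rewrite H by lia. auto. Qed.
Lemma rsum_plus m f g : rsum m (fun i => f i + g i) = rsum m f + rsum m g.
Proof. induction m; simpl; [lra|rewrite IHm; lra]. Qed.
Lemma rsum_scal m a f : rsum m (fun i => a * f i) = a * rsum m f.
Proof. induction m; simpl; [lra|rewrite IHm; lra]. Qed.
Lemma rsum_le m f g : (forall i, (i < m)%nat -> f i <= g i) -> rsum m f <= rsum m g.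
Proof. induction m; simpl; intros H; [lra|]. assert (H1 := H m ltac:(lia)). assert (rsum m f <= rsum m g) by (apply IHm; intros; apply H; lia). lra. Qed.
Lemma rsum_zero m : rsum m (fun _ => 0) = 0.
Proof. induction m; simpl; [lra|rewrite IHm; lra]. Qed.
Lemma rsum_nonneg m f : (forall i, (i < m)%nat -> 0 <= f i) -> 0 <= rsum m f.
Proof. intros H. rewrite <- (rsum_zero m). apply rsum_le; auto. Qed.
Lemma rsum_term_le m f i : (forall i, (i < m)%nat -> 0 <= f i) -> (i < m)%nat -> f i <= rsum m f.
Proof. induction m; simpl; intros H Hi; [lia|].
  assert (0 <= rsum m f) by (apply rsum_nonneg; intros; apply H; lia).
  destruct (Nat.eq_dec i m). subst; lra.
  assert (f i <= rsum m f) by (apply IHm; [intros; apply H|]; lia). assert (0 <= f m) by (apply H; lia). lra. Qed.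
Lemma rsum_swap m p f : rsum m (fun i => rsum p (fun j => f i j)) = rsum p (fun j => rsum m (fun i => f i j)).
Proof. induction m; simpl. rewrite rsum_zero; auto. rewrite IHm. rewrite <- rsum_plus. auto. Qed.
Lemma rsum_delta m i x : (i < m)%nat -> rsum m (fun j => (if Nat.eqb i j then 1 else 0) * x j) = x i.
Proof. induction m; simpl; intros H; [lia|].
  destruct (Nat.eq_dec i m).
  - subst. rewrite Nat.eqb_refl. rewrite (rsum_ext m _ (fun _ => 0)). rewrite rsum_zero; lra.
    intros j Hj. destruct (Nat.eqb_spec m j); [lia|lra].
  - rewrite IHm by lia. destruct (Nat.eqb_spec i m); [lia|lra]. Qed.

Definition vlc (a : R) (x : vec) (b : R) (y : vec) : vec := fun i => a * x i + b * y i.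
Definition Bf n M (x y : vec) := ip n x (mapply n M y).
Definition Qf n M x := Bf n M x x.

Lemma mapply_lc n M a x b y i : (i < n)%nat -> mapply n M (vlc a x b y) i = a * mapply n M x i + b * mapply n M y i.
Proof. intros H. unfold mapply. replace (Nat.ltb i n) with true by (symmetry; apply Nat.ltb_lt; auto).
  unfold vlc. rewrite <- !rsum_scal, <- rsum_plus. apply rsum_ext; intros; ring. Qed.
Lemma Bf_lc_l n M a x b y z : Bf n M (vlc a x b y) z = a * Bf n M x z + b * Bf n M y z.
Proof. unfold Bf, ip, vlc. rewrite <- !rsum_scal, <- rsum_plus. apply rsum_ext; intros; ring. Qed.
Lemma Bf_lc_r n M a x b y z : Bf n M z (vlc a x b y) = a * Bf n M z x + b * Bf n M z y.
Proof. unfold Bf, ip. rewrite <- !rsum_scal, <- rsum_plus. apply rsum_ext; intros. rewrite mapply_lc by auto. ring. Qed.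
Lemma Bf_expand n M x y : Bf n M x y = rsum n (fun i => rsum n (fun j => x i * M i j * y j)).
Proof. unfold Bf, ip, mapply. apply rsum_ext; intros i Hi.
  replace (Nat.ltb i n) with true by (symmetry; apply Nat.ltb_lt; auto).
  rewrite <- rsum_scal. apply rsum_ext; intros; ring. Qed.
Lemma Bf_sym n M x y : self_adjoint n M -> Bf n M x y = Bf n M y x.
Proof. intros H. rewrite !Bf_expand, rsum_swap. apply rsum_ext; intros i Hi. apply rsum_ext; intros j Hj.
  rewrite (H j i) by auto. ring. Qed.
Lemma vsub_lc x y : vsub x y = vlc 1 x (-1) y.
Proof. apply functional_extensionality; intros i; unfold vsub, vlc; ring. Qed.
Lemma inX_lc n a x b y : inX n x -> inX n y -> inX n (vlc a x b y).
Proof. unfold inX, vlc; intros Hx Hy i Hi. rewrite Hx, Hy by auto. ring. Qed.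
Lemma inX_sub n x y : inX n x -> inX n y -> inX n (vsub x y).
Proof. rewrite vsub_lc. apply inX_lc. Qed.

Definition psd n M := self_adjoint n M /\ forall x, inX n x -> 0 <= Qf n M x.

Lemma Qf_lc n M a x b y : self_adjoint n M ->
  Qf n M (vlc a x b y) = a*a*Qf n M x + 2*a*b*Bf n M x y + b*b*Qf n M y.
Proof. intros H. unfold Qf. rewrite Bf_lc_l, !Bf_lc_r. rewrite (Bf_sym n M y x H). ring. Qed.

Lemma CS n M x y : psd n M -> inX n x -> inX n y -> Bf n M x y * Bf n M x y <= Qf n M x * Qf n M y.
Proof. intros [Hs Hp] Hx Hy.
  assert (Hq : forall t, 0 <= Qf n M x - 2*t*Bf n M x y + t*t*Qf n M y).
  { intros t. assert (H := Hp (vlc 1 x (-t) y) (inX_lc _ _ _ _ _ Hx Hy)). rewrite Qf_lc in H by auto. nra. }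
  assert (H0x := Hp x Hx). assert (H0y := Hp y Hy).
  set (B := Bf n M x y) in *. set (a := Qf n M x) in *. set (c := Qf n M y) in *.
  destruct (Req_dec c 0) as [E|E].
  - destruct (Req_dec B 0) as [E2|E2]. rewrite E2; nra.
    exfalso. assert (H := Hq ((a+1)/(2*B))). rewrite E in H.
    replace (2 * ((a + 1) / (2 * B)) * B) with (a+1) in H by (field; auto). nra.
  - assert (H := Hq (B/c)). assert (0 < c) by lra.
    replace (a - 2 * (B / c) * B + B / c * (B / c) * c) with ((a*c - B*B)/c) in H by (field; auto).
    assert (0 <= a*c - B*B). { apply Rmult_le_reg_r with (/c). apply Rinv_0_lt_compat; auto. rewrite Rmult_0_l. exact H. }
    lra. Qed.

Lemma Qf_nonneg n M x : psd n M -> inX n x -> 0 <= Qf n M x.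
Proof. intros [_ H] Hx; auto. Qed.

Lemma normM_Qf n M x : normM n M x = sqrt (Qf n M x).
Proof. reflexivity. Qed.

Lemma Bf_le_norm n M x y : psd n M -> inX n x -> inX n y -> Bf n M x y <= normM n M x * normM n M y.
Proof. intros Hp Hx Hy. rewrite !normM_Qf. rewrite <- sqrt_mult_alt by (apply Qf_nonneg; auto).
  assert (H := CS n M x y Hp Hx Hy).
  destruct (Rle_dec (Bf n M x y) 0). assert (0 <= sqrt (Qf n M x * Qf n M y)) by apply sqrt_pos. lra.
  rewrite <- (sqrt_square (Bf n M x y)) by lra. apply sqrt_le_1_alt. auto. Qed.

Lemma normM_tri n M x y : psd n M -> inX n x -> inX n y -> normM n M (vlc 1 x 1 y) <= normM n M x + normM n M y.
Proof. intros Hp Hx Hy. assert (HB := Bf_le_norm n M x y Hp Hx Hy).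
  assert (Ex := sqrt_sqrt _ (Qf_nonneg n M x Hp Hx)). assert (Ey := sqrt_sqrt _ (Qf_nonneg n M y Hp Hy)).
  rewrite <- !normM_Qf in Ex, Ey.
  apply Rsqr_incr_0_var. 2: { assert (H1 := sqrt_pos (Qf n M x)). assert (H2 := sqrt_pos (Qf n M y)). rewrite !normM_Qf. lra. }
  unfold Rsqr. rewrite normM_Qf, sqrt_sqrt by (apply Qf_nonneg; auto; apply inX_lc; auto).
  rewrite Qf_lc by (destruct Hp; auto). nra. Qed.

Lemma normM_sub_tri n M x y u : psd n M -> inX n x -> inX n y -> inX n u ->
  normM n M (vsub x u) <= normM n M (vsub x y) + normM n M (vsub y u).
Proof. intros. replace (vsub x u) with (vlc 1 (vsub x y) 1 (vsub y u)).
  apply normM_tri; auto; apply inX_sub; auto.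
  apply functional_extensionality; intros i; unfold vsub, vlc; ring. Qed.

Lemma ip_self_nonneg n x : 0 <= ip n x x.
Proof. apply rsum_nonneg; intros; nra. Qed.
Lemma coord_sq_le n x i : (i < n)%nat -> x i * x i <= ip n x x.
Proof. intros H. apply (rsum_term_le n (fun i => x i * x i)); auto; intros; nra. Qed.

Lemma Qf_mscale n a M x : Qf n (mscale a M) x = a * Qf n M x.
Proof. unfold Qf, Bf, ip, mapply, mscale. rewrite <- rsum_scal. apply rsum_ext; intros i Hi.
  destruct (Nat.ltb i n); [|ring].
  rewrite (rsum_ext n _ (fun j => a * (M i j * x j))) by (intros; ring). rewrite rsum_scal; ring. Qed.

Lemma Qf_id n x : Qf n idmat x = ip n x x.
Proof. unfold Qf, Bf, ip, mapply. apply rsum_ext; intros i Hi.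
  replace (Nat.ltb i n) with true by (symmetry; apply Nat.ltb_lt; auto). unfold idmat. rewrite rsum_delta; auto. Qed.

Lemma psd_id n : psd n idmat.
Proof. split. intros i j _ _. unfold idmat. rewrite Nat.eqb_sym. auto.
  intros x _. rewrite Qf_id. apply ip_self_nonneg. Qed.

Lemma enorm_normM n x : enorm n x = normM n idmat x.
Proof. unfold enorm. rewrite normM_Qf, Qf_id. auto. Qed.

Lemma coord_le_enorm n x i : (i < n)%nat -> Rabs (x i) <= enorm n x.
Proof. intros H. unfold enorm. rewrite <- sqrt_Rsqr_abs. apply sqrt_le_1_alt. unfold Rsqr. apply coord_sq_le; auto. Qed.

Lemma Qf_upper0 n M x : Qf n M x <= rsum n (fun i => rsum n (fun j => Rabs (M i j))) * ip n x x.
Proof. unfold Qf. rewrite Bf_expand. rewrite Rmult_comm, <- rsum_scal. apply rsum_le; intros i Hi.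
  rewrite <- rsum_scal. apply rsum_le; intros j Hj.
  assert (Hi2 := coord_sq_le n x i Hi). assert (Hj2 := coord_sq_le n x j Hj).
  assert (Rabs (x i) * Rabs (x j) <= ip n x x).
  { destruct (Rle_dec (Rabs (x i)) (Rabs (x j))).
    - apply Rle_trans with (Rabs (x j) * Rabs (x j)). apply Rmult_le_compat_r; auto. apply Rabs_pos.
      rewrite <- Rabs_mult. rewrite Rabs_right by nra. auto.
    - apply Rle_trans with (Rabs (x i) * Rabs (x i)). apply Rmult_le_compat_l. apply Rabs_pos. lra.
      rewrite <- Rabs_mult. rewrite Rabs_right by nra. auto. }
  assert (x i * M i j * x j <= Rabs (M i j) * (Rabs (x i) * Rabs (x j))).
  { replace (Rabs (M i j) * (Rabs (x i) * Rabs (x j))) with (Rabs (x i * M i j * x j)) by (rewrite !Rabs_mult; ring).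
    apply Rle_abs. }
  assert (0 <= Rabs (M i j)) by apply Rabs_pos. nra. Qed.

Lemma rsum_sum_f m u : rsum (S m) u = sum_f_R0 u m.
Proof. induction m; simpl in *. ring. rewrite <- IHm. simpl. ring. Qed.

Lemma rsum_mono m p u : (forall i, 0 <= u i) -> (m <= p)%nat -> rsum m u <= rsum p u.
Proof. intros H Hmp. induction Hmp. lra. simpl. specialize (H m0). lra. Qed.

Lemma psum_bound u s : (forall k, 0 <= u k) -> infinite_sum u s -> forall k, rsum k u <= s.
Proof. intros H Hs k. apply Rnot_lt_le; intros Hlt.
  destruct (Hs (rsum k u - s) ltac:(lra)) as [N HN].
  specialize (HN (k + N)%nat ltac:(lia)). rewrite <- rsum_sum_f in HN. unfold Rdist in HN.
  assert (rsum k u <= rsum (S (k+N)) u) by (apply rsum_mono; auto; lia).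
  apply Rabs_def2 in HN. lra. Qed.

Lemma terms_to_zero u s : infinite_sum u s -> Un_cv u 0.
Proof. intros Hs e He. destruct (Hs (e/2) ltac:(lra)) as [N HN]. exists (S N). intros k Hk.
  destruct k. lia. assert (H1 := HN k ltac:(lia)). assert (H2 := HN (S k) ltac:(lia)).
  simpl in H2. unfold Rdist in *. rewrite Rminus_0_r. apply Rabs_def2 in H1. apply Rabs_def2 in H2.
  apply Rabs_def1; lra. Qed.

Lemma exp_ge1p x : 0 <= x -> 1 + x <= exp x.
Proof. intros H. destruct (Req_dec x 0). subst. rewrite exp_0. lra. left. apply exp_ineq1; auto. Qed.

Lemma cv_const c : Un_cv (fun _ => c) c.
Proof. intros e He. exists O. intros. unfold Rdist. rewrite Rminus_diag, Rabs_R0. lra. Qed.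

Lemma cv_ext u v l : (forall k, u k = v k) -> Un_cv u l -> Un_cv v l.
Proof. intros H Hu e He. destruct (Hu e He) as [N HN]. exists N. intros. rewrite <- H. auto. Qed.

Lemma squeeze u v w l : (forall k, u k <= v k <= w k) -> Un_cv u l -> Un_cv w l -> Un_cv v l.
Proof. intros H Hu Hw e He. destruct (Hu e He) as [N1 H1]. destruct (Hw e He) as [N2 H2].
  exists (max N1 N2). intros k Hk. specialize (H1 k ltac:(lia)). specialize (H2 k ltac:(lia)). specialize (H k).
  unfold Rdist in *. apply Rabs_def2 in H1. apply Rabs_def2 in H2. apply Rabs_def1; lra. Qed.

Lemma cv_sq0 r : (forall k, 0 <= r k) -> Un_cv (fun k => r k * r k) 0 -> Un_cv r 0.
Proof. intros H0 H e He. destruct (H (e*e) ltac:(nra)) as [N HN]. exists N. intros k Hk.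
  specialize (HN k Hk). specialize (H0 k). unfold Rdist in *. rewrite Rminus_0_r in *.
  rewrite Rabs_right in * by nra. nra. Qed.

Lemma cv_le_lim u v l1 l2 : (forall k, u k <= v k) -> Un_cv u l1 -> Un_cv v l2 -> l1 <= l2.
Proof. intros H Hu Hv. apply Rnot_lt_le; intros Hlt. set (e := (l1 - l2)/2).
  destruct (Hu e ltac:(unfold e; lra)) as [N1 H1]. destruct (Hv e ltac:(unfold e; lra)) as [N2 H2].
  specialize (H1 (max N1 N2) ltac:(lia)). specialize (H2 (max N1 N2) ltac:(lia)). specialize (H (max N1 N2)).
  unfold Rdist in *. apply Rabs_def2 in H1. apply Rabs_def2 in H2. unfold e in *. lra. Qed.

Lemma cv_sub u l phi : Un_cv u l -> (forall k, (k <= phi k)%nat) -> Un_cv (fun k => u (phi k)) l.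
Proof. intros H Hp e He. destruct (H e He) as [N HN]. exists N. intros k Hk. apply HN. specialize (Hp k). lia. Qed.

Lemma conv_qd x d lb D : (forall k, lb <= x k) -> (forall k, 0 <= d k) -> (forall k, rsum k d <= D) ->
  (forall k, x (S k) <= x k + d k) -> exists l, Un_cv x l.
Proof. intros Hlb Hd HD Hx.
  destruct (decreasing_cv (fun k => x k - rsum k d)) as [l1 Hl1].
  { intros k. cbv beta. change (rsum (S k) d) with (rsum k d + d k). specialize (Hx k). lra. }
  { exists (D - lb). intros r [i ->]. unfold opp_seq. specialize (Hlb i). specialize (HD i). lra. }
  destruct (growing_cv (fun k => rsum k d)) as [l2 Hl2].
  { intros k. cbv beta. change (rsum (S k) d) with (rsum k d + d k). specialize (Hd k). lra. }
  { exists D. intros r [i ->]. auto. }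
  exists (l1 + l2). apply cv_ext with (fun k => (x k - rsum k d) + rsum k d). intros; ring.
  apply CV_plus; auto. Qed.

Lemma QF_lemma a nu eps Snu Seps : (forall k, 0 <= a k) -> (forall k, 0 <= nu k) -> (forall k, 0 <= eps k) ->
  (forall k, rsum k nu <= Snu) -> (forall k, rsum k eps <= Seps) ->
  (forall k, a (S k) <= (1 + nu k) * (a k + eps k)) ->
  (exists A, forall k, a k <= A) /\ (exists l, Un_cv a l).
Proof. intros Ha Hnu Heps HSnu HSeps Hrec.
  assert (Hb : forall k, a k <= exp (rsum k nu) * (a O + rsum k eps)).
  { induction k. simpl. rewrite exp_0. lra. simpl.
    assert (E1 := exp_ge1p (nu k) (Hnu k)). assert (E2 : 1 <= exp (rsum k nu)).
    { rewrite <- exp_0. destruct (Req_dec (rsum k nu) 0) as [E|E]. rewrite E; lra.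
      left. apply exp_increasing. assert (0 <= rsum k nu) by (apply rsum_nonneg; auto). lra. }
    rewrite exp_plus. specialize (Hrec k). assert (0 <= eps k) by auto. assert (0 <= nu k) by auto.
    assert (0 <= a k) by auto.
    apply Rle_trans with ((1 + nu k) * (exp (rsum k nu) * (a 0%nat + rsum k eps) + eps k)). nra.
    assert (0 <= exp (rsum k nu) * (a 0%nat + rsum k eps)).
    { apply Rmult_le_pos. left; apply exp_pos. assert (0 <= rsum k eps) by (apply rsum_nonneg; auto). specialize (Ha O). lra. }
    apply Rle_trans with (exp (nu k) * (exp (rsum k nu) * (a 0%nat + rsum k eps) + exp (rsum k nu) * eps k)).
    apply Rmult_le_compat; try lra. assert (eps k <= exp (rsum k nu) * eps k) by nra. lra.
    right. ring. }
  set (A := exp Snu * (a O + Seps)).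
  assert (HA : forall k, a k <= A).
  { intros k. apply Rle_trans with (1 := Hb k). unfold A. apply Rmult_le_compat.
    left; apply exp_pos. assert (0 <= rsum k eps) by (apply rsum_nonneg; auto). specialize (Ha O). lra.
    destruct (Req_dec (rsum k nu) Snu) as [E|E]. rewrite E; lra. left; apply exp_increasing. specialize (HSnu k). lra.
    specialize (HSeps k). lra. }
  split. exists A; auto.
  assert (HA0 : 0 <= A) by (apply Rle_trans with (a O); auto).
  apply (conv_qd a (fun k => nu k * A + (1 + Snu) * eps k) 0 (Snu * A + (1 + Snu) * Seps)); auto.
  - intros k. specialize (Hnu k). specialize (Heps k). assert (0 <= Snu) by (apply Rle_trans with (rsum O nu); auto; simpl; lra). nra.
  - intros k. rewrite rsum_plus, rsum_scal. rewrite (rsum_ext k (fun i => nu i * A) (fun i => A * nu i)) by (intros; ring).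
    rewrite rsum_scal. assert (0 <= Snu) by (apply Rle_trans with (rsum O nu); auto; simpl; lra). specialize (HSnu k). specialize (HSeps k).
    assert (A * rsum k nu <= A * Snu) by (apply Rmult_le_compat_l; auto).
    assert ((1 + Snu) * rsum k eps <= (1+Snu) * Seps) by (apply Rmult_le_compat_l; lra). lra.
  - intros k. assert (nu k <= Snu). { apply Rle_trans with (rsum (S k) nu). 2: apply HSnu. simpl. assert (0 <= rsum k nu) by (apply rsum_nonneg; auto). lra. }
    specialize (Hrec k). specialize (HA k). specialize (Hnu k). specialize (Heps k).
    specialize (Ha k). nra. Qed.

Definition mono (phi : nat -> nat) := forall k, (phi k < phi (S k))%nat.
Lemma mono_lt phi a b : mono phi -> (a < b)%nat -> (phi a < phi b)%nat.
Proof. intros H Hab. induction Hab. apply H. specialize (H m). lia. Qed.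
Lemma mono_ge phi : mono phi -> forall k, (k <= phi k)%nat.
Proof. intros H k. induction k. lia. specialize (H k). lia. Qed.

Lemma BW1 (u : nat -> R) B : (forall k, Rabs (u k) <= B) -> exists phi l, mono phi /\ Un_cv (fun k => u (phi k)) l.
Proof. intros HB. destruct (Bolzano_Weierstrass u (fun c => -B <= c <= B) (compact_P3 (-B) B)) as [l Hl].
  { intros k. specialize (HB k). unfold Rabs in HB; destruct (Rcase_abs (u k)); lra. }
  assert (G : forall N k, exists p, (N <= p)%nat /\ Rabs (u p - l) < / (INR k + 1)).
  { intros N k. assert (Hp : 0 < / (INR k + 1)). { apply Rinv_0_lt_compat. assert (0 <= INR k) by apply pos_INR. lra. }
    destruct (Hl (disc l (mkposreal _ Hp)) N) as [p [Hp1 Hp2]].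
    { exists (mkposreal _ Hp). intros y Hy; exact Hy. }
    exists p. split; [auto|exact Hp2]. }
  set (g := fun N k => proj1_sig (constructive_indefinite_description _ (G N k))).
  assert (Hg : forall N k, (N <= g N k)%nat /\ Rabs (u (g N k) - l) < / (INR k + 1)).
  { intros N k. unfold g. destruct (constructive_indefinite_description _ (G N k)) as [p Hp]. simpl. auto. }
  set (phi := fix phi k := match k with O => g O O | S k' => g (S (phi k')) (S k') end).
  exists phi, l. split.
  - intros k. simpl. destruct (Hg (S (phi k)) (S k)). lia.
  - intros e He. destruct (archimed (/e)) as [Ha _].
    assert (Hz : (0 <= up (/e))%Z). { apply le_IZR. assert (0 < /e) by (apply Rinv_0_lt_compat; auto). lra. }
    exists (Z.to_nat (up (/e))). intros k Hk.
    assert (Hk' : / (INR k + 1) < e).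
    { assert (INR (Z.to_nat (up (/e))) <= INR k) by (apply le_INR; lia).
      rewrite INR_IZR_INZ, Z2Nat.id in H by auto.
      assert (/e < INR k + 1) by lra. assert (0 < /e) by (apply Rinv_0_lt_compat; auto).
      replace e with (/ / e) by (field; lra). apply Rinv_lt_contravar; nra. }
    unfold Rdist. assert (Rabs (u (phi k) - l) < / (INR k + 1)).
    { destruct k; simpl; apply Hg. }
    lra. Qed.

Lemma BWn (v : nat -> vec) B m : (forall k i, Rabs (v k i) <= B) ->
  exists phi l, mono phi /\ forall i, (i < m)%nat -> Un_cv (fun k => v (phi k) i) (l i).
Proof. intros HB. induction m.
  - exists (fun k => k), (fun _ => 0). split. intros k; lia. intros; lia.
  - destruct IHm as [phi [l [Hm Hc]]].
    destruct (BW1 (fun k => v (phi k) m) B) as [psi [lm [Hpsi Hlm]]]. intros; apply HB.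
    exists (fun k => phi (psi k)), (fun i => if Nat.eqb i m then lm else l i). split.
    + intros k. apply mono_lt; auto.
    + intros i Hi. destruct (Nat.eqb_spec i m). subst; auto.
      apply (cv_sub (fun k => v (phi k) i)). apply Hc; lia. apply mono_ge; auto. Qed.

Lemma cv_rsum m (u : nat -> nat -> R) l : (forall i, (i < m)%nat -> Un_cv (fun k => u k i) (l i)) ->
  Un_cv (fun k => rsum m (u k)) (rsum m l).
Proof. induction m; intros H; simpl. apply cv_const.
  apply CV_plus. apply IHm; intros; apply H; lia. apply H; lia. Qed.

Lemma inf_exists (D : vec -> Prop) (f : vec -> R) : (forall x, 0 <= f x) -> (exists x, D x) ->
  exists d, (forall x, D x -> d <= f x) /\ (forall e, 0 < e -> exists x, D x /\ f x < d + e).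
Proof. intros Hf [x0 Hx0].
  destruct (completeness (fun r => exists x, D x /\ r = - f x)) as [m [Hub Hlub]].
  { exists 0. intros r [x [_ ->]]. specialize (Hf x). lra. }
  { exists (- f x0). eauto. }
  exists (- m). split.
  - intros x Hx. assert (- f x <= m) by (apply Hub; eauto). lra.
  - intros e He. apply NNPP; intros H.
    assert (m <= m - e). { apply Hlub. intros r [x [Hx ->]].
      destruct (Rlt_dec (f x) (- m + e)). exfalso; apply H; eauto. lra. }
    lra. Qed.

Lemma le_eps a b c : 0 < c -> (forall e, 0 < e -> a <= b + c * e) -> a <= b.
Proof. intros Hc H. apply Rnot_lt_le; intros Hlt. specialize (H ((a - b)/(2*c))).
  assert (0 < (a-b)/(2*c)) by (apply Rdiv_lt_0_compat; lra). specialize (H H0).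
  replace (c * ((a - b) / (2 * c))) with ((a-b)/2) in H by (field; lra). lra. Qed.

Lemma normM_nonneg n M x : 0 <= normM n M x.
Proof. apply sqrt_pos. Qed.

Lemma normM_sq n M x : psd n M -> inX n x -> normM n M x * normM n M x = Qf n M x.
Proof. intros. rewrite normM_Qf. apply sqrt_sqrt. apply Qf_nonneg; auto. Qed.

Theorem mainTheorem3
  (n : nat) (T : vec -> vec -> Prop) (c : nat -> R) (M : nat -> mat)
  (nu : nat -> R) (lmin linf : R) (lmax : nat -> R)
  (z : nat -> vec) (eps : nat -> R)
  (HT : maximal_monotone n T)
  (Hc : exists c0, 0 < c0 /\ forall k, c0 <= c k)
  (Hnu : (forall k, 0 <= nu k) /\ exists s, infinite_sum nu s)
  (HMsa : forall k, self_adjoint n (M k))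
  (HMpd : forall k, pos_def n (M k))
  (HMdecr : forall k, loewner_le n (M (S k)) (mscale (1 + nu k) (M k)))
  (HMmin : forall k, loewner_le n (mscale lmin idmat) (M k))
  (Hlmax : forall k, is_lambda_max n (M k) (lmax k))
  (Hlinf : limsup_eq lmax linf)
  (Hlpos : 0 < lmin) (Hlle : lmin <= linf)
  (HOmega : exists x, T x zerov)
  (HzX : forall k, inX n (z k))
  (Heps : (forall k, 0 <= eps k) /\ exists s, infinite_sum eps s)
  (HA : forall k, exists w, is_prox n (M k) (c k) T (z k) w /\
                            normM n (M k) (vsub (z (S k)) w) <= eps k) :
  (exists B, forall k, enorm n (z k) <= B) /\
  (exists d : nat -> R,
     (forall k, is_distM n (M k) (z k) (fun x => T x zerov) (d k)) /\
     (forall k, d (S k) <= (1 + nu k) * d k + (1 + nu k) * eps k)) /\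
  (exists zinf, inX n zinf /\ T zinf zerov /\
     forall e, 0 < e -> exists N, forall k, (N <= k)%nat -> enorm n (vsub (z k) zinf) < e).
Proof.
  destruct Hc as [c0 [Hc0 Hc]]. destruct Hnu as [Hnu0 [Snu HSnu]]. destruct Heps as [Heps0 [Seps HSeps]].
  assert (Hnu_b := psum_bound nu Snu Hnu0 HSnu). assert (Heps_b := psum_bound eps Seps Heps0 HSeps).
  assert (Hnu_z := terms_to_zero nu Snu HSnu). assert (Heps_z := terms_to_zero eps Seps HSeps).
  assert (HSnu0 : 0 <= Snu) by (apply (Rle_trans _ (rsum O nu)); [simpl; lra| auto]).
  assert (HSeps0 : 0 <= Seps) by (apply (Rle_trans _ (rsum O eps)); [simpl; lra| auto]).
  destruct HT as [Hgr [Hmon Hmax]].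
  assert (HOX : forall x, T x zerov -> inX n x) by (intros x Hx; apply (Hgr _ _ Hx)).
  assert (Hlow : forall k v, inX n v -> lmin * ip n v v <= Qf n (M k) v).
  { intros k v Hv. assert (H := HMmin k v Hv). change (Qf n (mscale lmin idmat) v <= Qf n (M k) v) in H.
    rewrite Qf_mscale, Qf_id in H. auto. }
  assert (Hpsd : forall k, psd n (M k)).
  { intros k. split; auto. intros v Hv. assert (H := Hlow k v Hv). assert (H2 := ip_self_nonneg n v). nra. }
  assert (Hdec : forall k v, inX n v -> normM n (M (S k)) v <= (1 + nu k) * normM n (M k) v).
  { intros k v Hv. assert (H := HMdecr k v Hv). change (Qf n (M (S k)) v <= Qf n (mscale (1 + nu k) (M k)) v) in H.
    rewrite Qf_mscale in H. rewrite !normM_Qf. specialize (Hnu0 k).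
    rewrite <- (sqrt_square (1 + nu k)) by lra. rewrite <- sqrt_mult_alt by nra.
    apply sqrt_le_1_alt. assert (0 <= Qf n (M k) v) by (apply Qf_nonneg; auto). nra. }
  set (K := rsum n (fun i => rsum n (fun j => Rabs (M O i j)))).
  assert (HK : 0 <= K) by (apply rsum_nonneg; intros; apply rsum_nonneg; intros; apply Rabs_pos).
  set (Cup := exp Snu * K).
  assert (HCup : 0 <= Cup) by (unfold Cup; apply Rmult_le_pos; auto; left; apply exp_pos).
  assert (Hup : forall k v, inX n v -> Qf n (M k) v <= Cup * ip n v v).
  { intros k v Hv. assert (H : Qf n (M k) v <= exp (rsum k nu) * Qf n (M O) v).
    { induction k. simpl. rewrite exp_0. lra. simpl. rewrite exp_plus.
      assert (H := HMdecr k v Hv). change (Qf n (M (S k)) v <= Qf n (mscale (1 + nu k) (M k)) v) in H.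
      rewrite Qf_mscale in H. assert (E := exp_ge1p (nu k) (Hnu0 k)).
      assert (0 <= Qf n (M k) v) by (apply Qf_nonneg; auto). assert (0 < exp (nu k)) by apply exp_pos. nra. }
    assert (H0 := Qf_upper0 n (M O) v). assert (0 <= Qf n (M O) v) by (apply Qf_nonneg; auto).
    assert (exp (rsum k nu) <= exp Snu).
    { destruct (Req_dec (rsum k nu) Snu) as [E|E]. rewrite E; lra. left; apply exp_increasing. specialize (Hnu_b k). lra. }
    unfold Cup. assert (0 <= ip n v v) by apply ip_self_nonneg. fold K in H0.
    assert (0 < exp (rsum k nu)) by apply exp_pos. nra. }
  assert (Hlowsq : forall k v, inX n v -> sqrt lmin * enorm n v <= normM n (M k) v).
  { intros k v Hv. unfold enorm. rewrite normM_Qf, <- sqrt_mult_alt by lra. apply sqrt_le_1_alt. apply Hlow; auto. }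
  assert (G : forall k, exists p : prod vec vec, T (fst p) (snd p) /\
     (forall i, (i < n)%nat -> mapply n (M k) (z k) i = mapply n (M k) (fst p) i + c k * snd p i) /\
     normM n (M k) (vsub (z (S k)) (fst p)) <= eps k).
  { intros k. destruct (HA k) as [w [[t [Ht Hm]] He]]. exists (w, t). simpl. auto. }
  set (wt := fun k => proj1_sig (constructive_indefinite_description _ (G k))).
  set (w := fun k => fst (wt k)). set (t := fun k => snd (wt k)).
  assert (Hwt : forall k, T (w k) (t k) /\
     (forall i, (i < n)%nat -> mapply n (M k) (z k) i = mapply n (M k) (w k) i + c k * t k i) /\
     normM n (M k) (vsub (z (S k)) (w k)) <= eps k).
  { intros k. unfold w, t, wt. destruct (constructive_indefinite_description _ (G k)). simpl. auto. }
  clearbody w t. clear wt G.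
  assert (HwX : forall k, inX n (w k)) by (intros k; destruct (Hwt k) as [H _]; apply (Hgr _ _ H)).
  assert (Hbp : forall k u, Bf n (M k) u (vsub (z k) (w k)) = c k * ip n u (t k)).
  { intros k u. unfold Bf, ip. rewrite <- rsum_scal. apply rsum_ext; intros i Hi.
    rewrite vsub_lc, mapply_lc by auto. destruct (Hwt k) as [_ [Hm _]]. rewrite Hm by auto. ring. }
  assert (Hfirm : forall k x, T x zerov ->
    Qf n (M k) (vsub (w k) x) + Qf n (M k) (vsub (z k) (w k)) <= Qf n (M k) (vsub (z k) x)).
  { intros k x Hx. replace (vsub (z k) x) with (vlc 1 (vsub (z k) (w k)) 1 (vsub (w k) x))
      by (apply functional_extensionality; intros i; unfold vsub, vlc; ring).
    rewrite Qf_lc by auto. rewrite (Bf_sym _ _ _ _ (HMsa k)), Hbp.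
    assert (0 <= ip n (vsub (w k) x) (t k)).
    { assert (H := Hmon _ _ _ _ (proj1 (Hwt k)) Hx). unfold ip in *.
      rewrite (rsum_ext n _ (fun i => vsub (w k) x i * vsub (t k) zerov i)); auto.
      intros; unfold vsub, zerov; ring. }
    specialize (Hc k). assert (0 < c k) by lra. nra. }
  assert (Hfej : forall k x, T x zerov ->
     normM n (M (S k)) (vsub (z (S k)) x) <= (1 + nu k) * (normM n (M k) (vsub (z k) x) + eps k)).
  { intros k x Hx. assert (HxX := HOX x Hx).
    apply Rle_trans with ((1 + nu k) * normM n (M k) (vsub (z (S k)) x)).
    apply Hdec. apply inX_sub; auto.
    apply Rmult_le_compat_l. specialize (Hnu0 k); lra.
    apply Rle_trans with (normM n (M k) (vsub (z (S k)) (w k)) + normM n (M k) (vsub (w k) x)).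
    apply normM_sub_tri; auto.
    assert (normM n (M k) (vsub (w k) x) <= normM n (M k) (vsub (z k) x)).
    { rewrite !normM_Qf. apply sqrt_le_1_alt. assert (H := Hfirm k x Hx).
      assert (0 <= Qf n (M k) (vsub (z k) (w k))) by (apply Qf_nonneg; auto; apply inX_sub; auto). lra. }
    destruct (Hwt k) as [_ [_ He]]. lra. }
  destruct HOmega as [x0 Hx0]. assert (Hx0X := HOX x0 Hx0).
  assert (HQF : forall x, T x zerov -> (exists A, forall k, normM n (M k) (vsub (z k) x) <= A) /\
      (exists l, Un_cv (fun k => normM n (M k) (vsub (z k) x)) l)).
  { intros x Hx. apply (QF_lemma _ nu eps Snu Seps); auto. intros; apply normM_nonneg. }
  destruct (HQF x0 Hx0) as [[A HAb] [L HL]].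
  assert (Hslp : 0 < sqrt lmin) by (apply sqrt_lt_R0; auto).
  assert (Hsq : forall k v, inX n v -> enorm n v <= normM n (M k) v / sqrt lmin).
  { intros k v Hv. assert (H := Hlowsq k v Hv). apply (Rmult_le_reg_l (sqrt lmin)); auto.
    field_simplify; lra. }
  split; [|split].
  - exists (A / sqrt lmin + enorm n x0). intros k.
    replace (z k) with (vlc 1 (vsub (z k) x0) 1 x0) at 1 by (apply functional_extensionality; intros i; unfold vsub, vlc; ring).
    rewrite !enorm_normM. eapply Rle_trans. apply normM_tri. apply psd_id. apply inX_sub; auto. auto.
    rewrite <- !enorm_normM. assert (H := Hsq k (vsub (z k) x0) (inX_sub _ _ _ (HzX k) Hx0X)).
    specialize (HAb k). assert (normM n (M k) (vsub (z k) x0) / sqrt lmin <= A / sqrt lmin).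
    { unfold Rdiv. apply Rmult_le_compat_r; auto. left; apply Rinv_0_lt_compat; auto. }
    lra.
  - assert (Hd : forall k, exists d, is_distM n (M k) (z k) (fun x => T x zerov) d).
    { intros k. destruct (inf_exists (fun x => T x zerov) (fun x => normM n (M k) (vsub (z k) x))) as [d Hd].
      intros; apply normM_nonneg. eauto. exists d. exact Hd. }
    set (d := fun k => proj1_sig (constructive_indefinite_description _ (Hd k))).
    assert (Hdd : forall k, is_distM n (M k) (z k) (fun x => T x zerov) (d k)).
    { intros k. unfold d. destruct (constructive_indefinite_description _ (Hd k)). auto. }
    clearbody d. exists d. split; auto.
    intros k. apply (le_eps _ _ (1 + nu k)). specialize (Hnu0 k); lra.
    intros e He. destruct (proj2 (Hdd k) e He) as [x [Hx Hxe]].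
    apply Rle_trans with (normM n (M (S k)) (vsub (z (S k)) x)). apply (proj1 (Hdd (S k))); auto.
    eapply Rle_trans. apply Hfej; auto. specialize (Hnu0 k). 
    apply Rle_trans with ((1 + nu k) * (d k + e + eps k)). apply Rmult_le_compat_l; lra. right; ring.
  - set (a := fun k => normM n (M k) (vsub (z k) x0)).
    set (b := fun k => normM n (M k) (vsub (w k) x0)).
    set (r := fun k => normM n (M k) (vsub (z k) (w k))).
    assert (Hr0 : forall k, 0 <= r k) by (intros; apply normM_nonneg).
    assert (Hb0 : forall k, 0 <= b k) by (intros; apply normM_nonneg).
    assert (Hsqr : forall k, r k * r k + b k * b k <= a k * a k).
    { intros k. unfold a, b, r. rewrite !normM_sq; auto; try (apply inX_sub; auto). rewrite Rplus_comm. apply Hfirm; auto. }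
    assert (Hba : forall k, b k <= a k).
    { intros k. assert (H := Hsqr k). assert (0 <= a k) by apply normM_nonneg. specialize (Hr0 k). specialize (Hb0 k). nra. }
    assert (HaS : forall k, a (S k) <= (1 + nu k) * (eps k + b k)).
    { intros k. unfold a, b. eapply Rle_trans. apply Hdec. apply inX_sub; auto.
      apply Rmult_le_compat_l. specialize (Hnu0 k); lra. eapply Rle_trans. apply (normM_sub_tri n (M k) (z (S k)) (w k) x0); auto.
      destruct (Hwt k) as [_ [_ He]]. lra. }
    assert (Hbcv : Un_cv b L).
    { apply (squeeze (fun k => a (S k) - nu k * (Seps + A) - eps k) b a); auto.
      - intros k. split; auto. assert (H := HaS k). specialize (HAb k). fold a in HAb.
        assert (eps k <= Seps). { apply Rle_trans with (rsum (S k) eps); auto. simpl. assert (0 <= rsum k eps) by (apply rsum_nonneg; auto). lra. }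
        specialize (Hba k). specialize (Hnu0 k). specialize (Heps0 k).
        assert (nu k * eps k <= nu k * Seps) by (apply Rmult_le_compat_l; auto).
        assert (b k <= A). { eapply Rle_trans. apply Hba. apply HAb. }
        assert (nu k * b k <= nu k * A) by (apply Rmult_le_compat_l; lra). nra.
      - replace L with (L - 0 * (Seps + A) - 0) by ring. apply CV_minus. apply CV_minus.
        apply (cv_sub a L S); auto. apply CV_mult; auto. apply cv_const. auto. }
    assert (Hrcv : Un_cv r 0).
    { apply cv_sq0; auto. apply (squeeze (fun _ => 0) _ (fun k => a k * a k - b k * b k)).
      intros k. specialize (Hsqr k). specialize (Hr0 k). nra. apply cv_const.
      replace 0 with (L * L - L * L) by ring. apply CV_minus; apply CV_mult; auto. }
    assert (HzB : exists Bz, forall k i, Rabs (z k i) <= Bz).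
    { exists (A / sqrt lmin + enorm n x0). intros k i. destruct (Nat.lt_ge_cases i n) as [Hi|Hi].
      - eapply Rle_trans. apply coord_le_enorm; eauto.
        replace (z k) with (vlc 1 (vsub (z k) x0) 1 x0) at 1 by (apply functional_extensionality; intros j; unfold vsub, vlc; ring).
        rewrite !enorm_normM. eapply Rle_trans. apply normM_tri. apply psd_id. apply inX_sub; auto. auto.
        rewrite <- !enorm_normM. assert (H := Hsq k (vsub (z k) x0) (inX_sub _ _ _ (HzX k) Hx0X)).
        specialize (HAb k). assert (normM n (M k) (vsub (z k) x0) / sqrt lmin <= A / sqrt lmin).
        { unfold Rdiv. apply Rmult_le_compat_r; auto. left; apply Rinv_0_lt_compat; auto. }
        lra.
      - rewrite (HzX k i Hi), Rabs_R0. assert (0 <= A) by (apply Rle_trans with (a O); [apply normM_nonneg | apply HAb]).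
        assert (0 <= A / sqrt lmin) by (unfold Rdiv; apply Rmult_le_pos; [lra| left; apply Rinv_0_lt_compat; auto]). unfold enorm. assert (0 <= sqrt (ip n x0 x0)) by apply sqrt_pos. lra. }
    destruct HzB as [Bz HzB].
    destruct (BWn z Bz n HzB) as [phi [l [Hphi Hl]]].
    set (zinf := fun i => if Nat.ltb i n then l i else 0).
    assert (HzinfX : inX n zinf).
    { intros i Hi. unfold zinf. replace (Nat.ltb i n) with false; auto. symmetry; apply Nat.ltb_ge; auto. }
    assert (Hzcv : forall i, (i < n)%nat -> Un_cv (fun k => z (phi k) i) (zinf i)).
    { intros i Hi. unfold zinf. replace (Nat.ltb i n) with true by (symmetry; apply Nat.ltb_lt; auto). auto. }
    assert (Hrphi : Un_cv (fun k => r (phi k)) 0) by (apply cv_sub; auto; apply mono_ge; auto).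
    assert (Hwcv : forall i, (i < n)%nat -> Un_cv (fun k => w (phi k) i) (zinf i)).
    { intros i Hi. replace (zinf i) with (zinf i - 0) by ring.
      apply cv_ext with (fun k => z (phi k) i - (z (phi k) i - w (phi k) i)). intros; ring.
      apply CV_minus; auto.
      apply (squeeze (fun k => - (r (phi k) / sqrt lmin)) _ (fun k => r (phi k) / sqrt lmin)).
      - intros k. assert (H := coord_le_enorm n (vsub (z (phi k)) (w (phi k))) i Hi).
        assert (H2 := Hsq (phi k) _ (inX_sub _ _ _ (HzX (phi k)) (HwX (phi k)))). fold (r (phi k)) in H2.
        unfold vsub in H, H2. revert H; unfold Rabs; destruct Rcase_abs; intros; lra.
      - replace 0 with (- (0 / sqrt lmin)) by (field; lra). apply CV_opp. unfold Rdiv. apply CV_mult; auto. apply cv_const.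
      - replace 0 with (0 / sqrt lmin) by (field; lra). unfold Rdiv. apply CV_mult; auto. apply cv_const. }
    assert (HTz : T zinf zerov).
    { apply Hmax; auto. intros i _; reflexivity.
      intros x' y' Hxy. destruct (Hgr _ _ Hxy) as [Hx' Hy'].
      set (Wb := A + normM n (M O) (vsub x0 x') + sqrt (Cup * ip n (vsub x0 x') (vsub x0 x'))).
      assert (HWb : forall k, normM n (M k) (vsub (w k) x') <= Wb).
      { intros k. eapply Rle_trans. apply (normM_sub_tri n (M k) (w k) x0 x'); auto.
        assert (normM n (M k) (vsub x0 x') <= sqrt (Cup * ip n (vsub x0 x') (vsub x0 x'))).
        { rewrite normM_Qf. apply sqrt_le_1_alt. apply Hup. apply inX_sub; auto. }
        assert (b k <= A) by (eapply Rle_trans; [apply Hba | apply HAb]). unfold Wb. fold (b k).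
        assert (Hn0 := normM_nonneg n (M O) (vsub x0 x')). lra. }
      assert (HWb0 : 0 <= Wb) by (eapply Rle_trans; [apply normM_nonneg | apply (HWb O)]).
      assert (Hineq : forall k, ip n (vsub (w k) x') y' <= Wb * r k / c0).
      { intros k. assert (Hm := Hmon _ _ _ _ (proj1 (Hwt k)) Hxy).
        assert (E : ip n (vsub (w k) x') (vsub (t k) y') = ip n (vsub (w k) x') (t k) - ip n (vsub (w k) x') y').
        { unfold ip. rewrite (rsum_ext n _ (fun i => vsub (w k) x' i * t k i + (-1) * (vsub (w k) x' i * y' i))) by (intros; unfold vsub; ring).
          rewrite rsum_plus, rsum_scal. ring. }
        assert (Hbf := Hbp k (vsub (w k) x')).
        assert (Hcs := Bf_le_norm n (M k) (vsub (w k) x') (vsub (z k) (w k)) (Hpsd k) (inX_sub _ _ _ (HwX k) Hx') (inX_sub _ _ _ (HzX k) (HwX k))).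
        fold (r k) in Hcs. rewrite Hbf in Hcs. specialize (HWb k). specialize (Hr0 k). specialize (Hc k).
        assert (normM n (M k) (vsub (w k) x') * r k <= Wb * r k) by (apply Rmult_le_compat_r; auto).
        assert (c k * ip n (vsub (w k) x') (t k) <= Wb * r k) by lra.
        assert (ip n (vsub (w k) x') (t k) <= Wb * r k / c0).
        { destruct (Rle_dec (ip n (vsub (w k) x') (t k)) 0).
          assert (0 <= Wb * r k / c0) by (unfold Rdiv; apply Rmult_le_pos; [nra|left; apply Rinv_0_lt_compat; auto]). lra.
          apply (Rmult_le_reg_l c0); auto. field_simplify; [|lra]. nra. }
        lra. }
      assert (Hlim1 : Un_cv (fun k => ip n (vsub (w (phi k)) x') y') (ip n (vsub zinf x') y')).
      { unfold ip. apply cv_rsum. intros i Hi. unfold vsub. apply CV_mult; [apply CV_minus|]; auto; apply cv_const. }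
      assert (Hlim2 : Un_cv (fun k => Wb * r (phi k) / c0) 0).
      { replace 0 with (Wb * 0 * / c0) by ring. unfold Rdiv. apply CV_mult; [apply CV_mult|]; auto; apply cv_const. }
      assert (Hle := cv_le_lim _ _ _ _ (fun k => Hineq (phi k)) Hlim1 Hlim2).
      replace (ip n (vsub zinf x') (vsub zerov y')) with (- ip n (vsub zinf x') y'). lra.
      unfold ip. transitivity (rsum n (fun i => (-1) * (vsub zinf x' i * y' i))).
      rewrite rsum_scal. ring. apply rsum_ext; intros; unfold vsub, zerov; ring. }
    exists zinf. split; auto. split; auto.
    destruct (HQF zinf HTz) as [_ [L' HL']].
    set (a' := fun k => normM n (M k) (vsub (z k) zinf)) in *.
    assert (Ha'phi : Un_cv (fun k => a' (phi k)) 0).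
    { apply cv_sq0. intros; apply normM_nonneg.
      apply (squeeze (fun _ => 0) _ (fun k => Cup * ip n (vsub (z (phi k)) zinf) (vsub (z (phi k)) zinf))).
      - intros k. unfold a'. rewrite normM_sq; auto. 2: apply inX_sub; auto. split. apply Qf_nonneg; auto. apply inX_sub; auto.
        apply Hup. apply inX_sub; auto.
      - apply cv_const.
      - replace 0 with (Cup * rsum n (fun _ => 0)) by (rewrite rsum_zero; ring). apply CV_mult. apply cv_const.
        unfold ip. apply cv_rsum. intros i Hi. unfold vsub. replace 0 with ((zinf i - zinf i) * (zinf i - zinf i)) by ring.
        apply CV_mult; apply CV_minus; auto; apply cv_const. }
    assert (HL'0 : L' = 0). { apply (UL_sequence (fun k => a' (phi k))); auto. apply cv_sub; auto. apply mono_ge; auto. }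
    subst L'. intros e He. destruct (HL' (e * sqrt lmin)) as [N HN]. apply Rmult_lt_0_compat; auto.
    exists N. intros k Hk. specialize (HN k Hk). unfold Rdist in HN. rewrite Rminus_0_r, Rabs_right in HN by (apply Rle_ge, normM_nonneg).
    assert (H := Hsq k (vsub (z k) zinf) (inX_sub _ _ _ (HzX k) HzinfX)). fold (a' k) in H.
    apply Rle_lt_trans with (a' k / sqrt lmin); auto. apply (Rmult_lt_reg_r (sqrt lmin)); auto. field_simplify; lra.
Qed.
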